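(* Let $X$ be a real Hilbert space, let $U,V$ be closed affine subspaces with $U\cap V=\varnothing$, let $T:=T_{U,V}$ and assume $v:=P_{\overline{\operatorname{ran}}(\mathrm{Id}-T)}0\in\operatorname{ran}(\mathrm{Id}-T)$. Set $\widetilde A:=N_U^{-1}$ and $\widetilde B:=N_V^{-\vee}$. Then $T_{(\widetilde A,\widetilde B)}=T_{U,V}$, and for every $x\in X$, $J_{\widetilde A}T^nx=T^nx-P_UT^nx$ and $\|J_{\widetilde A}T^nx\|\to\infty$.
   Context: For maximally monotone $A,B$: $J_A:=(\mathrm{Id}+A)^{-1}$, $T_{(A,B)}:=\mathrm{Id}-J_A+J_B(2J_A-\mathrm{Id})$; $T_{U,V}:=T_{(N_U,N_V)}=\mathrm{Id}-P_U+P_V(2P_U-\mathrm{Id})$. For an operator $C$, $C^\vee:=(-\mathrm{Id})\circ C\circ(-\mathrm{Id})$ and $C^{-\vee}:=(C^{-1})^\vee$. *)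

(* Defs.v *)
From Stdlib Require Import Reals Lra ClassicalEpsilon.
Open Scope R_scope.

Record HilbertSpace := {
  carrier :> Type;
  hzero : carrier;
  hadd : carrier -> carrier -> carrier;
  hopp : carrier -> carrier;
  hscal : R -> carrier -> carrier;
  inner : carrier -> carrier -> R;
  hadd_assoc : forall x y z, hadd x (hadd y z) = hadd (hadd x y) z;
  hadd_comm : forall x y, hadd x y = hadd y x;
  hadd_0 : forall x, hadd x hzero = x;
  hadd_opp : forall x, hadd x (hopp x) = hzero;
  hscal_assoc : forall a b x, hscal a (hscal b x) = hscal (a * b) x;
  hscal_1 : forall x, hscal 1 x = x;
  hscal_distr_vec : forall a x y, hscal a (hadd x y) = hadd (hscal a x) (hscal a y);
  hscal_distr_scal : forall a b x, hscal (a + b) x = hadd (hscal a x) (hscal b x);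
  inner_sym : forall x y, inner x y = inner y x;
  inner_add_l : forall x y z, inner (hadd x y) z = inner x z + inner y z;
  inner_scal_l : forall a x y, inner (hscal a x) y = a * inner x y;
  inner_nonneg : forall x, 0 <= inner x x;
  inner_def : forall x, inner x x = 0 -> x = hzero;
  hcomplete : forall u : nat -> carrier,
    (forall eps, 0 < eps -> exists N, forall m n, (N <= m)%nat -> (N <= n)%nat ->
       sqrt (inner (hadd (u m) (hopp (u n))) (hadd (u m) (hopp (u n)))) < eps) ->
    exists l, forall eps, 0 < eps -> exists N, forall n, (N <= n)%nat ->
       sqrt (inner (hadd (u n) (hopp l)) (hadd (u n) (hopp l))) < eps
}.

Arguments hzero {h}.
Arguments hadd {h}.
Arguments hopp {h}.
Arguments hscal {h}.
Arguments inner {h}.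

Section Ops.
Context {X : HilbertSpace}.

Definition hsub (x y : X) : X := hadd x (hopp y).
Definition norm (x : X) : R := sqrt (inner x x).

Definition hset := X -> Prop.
Definition operator := X -> X -> Prop.   (* A x y  means  y ∈ A x *)

Definition closure (S : hset) : hset :=
  fun x => forall eps, 0 < eps -> exists s, S s /\ norm (hsub x s) < eps.
Definition is_closed (S : hset) : Prop := forall x, closure S x -> S x.

Definition is_affine (S : hset) : Prop :=
  (exists s, S s) /\
  forall x y (l : R), S x -> S y -> S (hadd (hscal (1 - l) x) (hscal l y)).
Definition is_closed_affine (S : hset) : Prop := is_affine S /\ is_closed S.

(** Metric projection onto C: the (unique, when C is nonempty closed convex)
    nearest point.  proj C x is chosen by classical choice among nearest points. *)
Definition is_proj (C : hset) (x p : X) : Prop :=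
  C p /\ forall c, C c -> norm (hsub x p) <= norm (hsub x c).
Definition proj (C : hset) (x : X) : X :=
  epsilon (inhabits hzero) (is_proj C x).

Definition normal_cone (C : hset) : operator :=
  fun x u => C x /\ forall c, C c -> inner u (hsub c x) <= 0.

Definition op_inv (A : operator) : operator := fun x y => A y x.
Definition op_vee (A : operator) : operator := fun x y => A (hopp x) (hopp y).
Definition op_inv_vee (A : operator) : operator := op_vee (op_inv A).

(** Resolvent J_A := (Id + A)^{-1}, as a relation: J_A x y iff x ∈ y + A y. *)
Definition resolvent (A : operator) : operator :=
  fun x y => A y (hsub x y).

(** Douglas–Rachford operator T_(A,B) := Id - J_A + J_B (2 J_A - Id), as a relation. *)
Definition DR_op (A B : operator) : operator :=
  fun x z => exists a b, resolvent A x a /\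
     resolvent B (hsub (hscal 2 a) x) b /\ z = hadd (hsub x a) b.

Definition T_UV (U V : hset) (x : X) : X :=
  hadd (hsub x (proj U x)) (proj V (hsub (hscal 2 (proj U x)) x)).

Definition ran_Id_minus (T : X -> X) : hset :=
  fun y => exists x, y = hsub x (T x).

End Ops.

(* Main.v *)
Require Import Defs.
From Stdlib Require Import Reals Lra Psatz ClassicalEpsilon.
Open Scope R_scope.

Section Basics.
Context {X : HilbertSpace}.
Implicit Types x y z a b c : X.

Lemma iadd_l x y z : inner (hadd x y) z = inner x z + inner y z.
Proof. apply inner_add_l. Qed.
Lemma iscal_l l x y : inner (hscal l x) y = l * inner x y.
Proof. apply inner_scal_l. Qed.
Lemma isym x y : inner x y = inner y x.
Proof. apply inner_sym. Qed.
Lemma iadd_r x y z : inner z (hadd x y) = inner z x + inner z y.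
Proof. rewrite isym, iadd_l, (isym x), (isym y); ring. Qed.
Lemma iscal_r l x y : inner y (hscal l x) = l * inner y x.
Proof. rewrite isym, iscal_l, (isym x); ring. Qed.
Lemma izero_l y : inner (@hzero X) y = 0.
Proof.
  assert (E : inner (hadd (@hzero X) hzero) y = inner (@hzero X) y) by (rewrite hadd_0; auto).
  rewrite iadd_l in E; lra.
Qed.
Lemma izero_r y : inner y (@hzero X) = 0.
Proof. rewrite isym; apply izero_l. Qed.
Lemma iopp_l x y : inner (hopp x) y = - inner x y.
Proof.
  assert (E : inner (hadd x (hopp x)) y = 0) by (rewrite hadd_opp; apply izero_l).
  rewrite iadd_l in E; lra.
Qed.
Lemma iopp_r x y : inner y (hopp x) = - inner y x.
Proof. rewrite isym, iopp_l, isym; auto. Qed.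

Lemma veq a b : inner (hsub a b) (hsub a b) = 0 -> a = b.
Proof.
  intro H. apply inner_def in H. unfold hsub in H.
  rewrite <- (hadd_0 _ a), <- (hadd_opp _ b), (hadd_comm _ b), hadd_assoc, H,
    hadd_comm, hadd_0. reflexivity.
Qed.
End Basics.

Ltac expand := unfold hsub; repeat (rewrite ?iadd_l, ?iadd_r, ?iscal_l, ?iscal_r,
   ?iopp_l, ?iopp_r, ?izero_l, ?izero_r).
Ltac symnorm := repeat match goal with
 | |- context [@inner ?h ?a ?b] => match goal with |- context [@inner h b a] =>
      tryif constr_eq a b then (fail) else rewrite (isym b a) end end.
Ltac vec := apply veq; expand; symnorm; ring.
Ltac rid := expand; symnorm; ring.

Section Test.
Context {X : HilbertSpace}.
Goal forall (x y p : X) (l : R), hsub (hadd (hscal (1-l) x) (hscal l y)) p =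
  hadd (hscal (1-l) (hsub x p)) (hscal l (hsub y p)).
intros. vec. Qed.
End Test.

Section Norms.
Context {X : HilbertSpace}.
Implicit Types x y z a b c : X.

Lemma inn_nn x : 0 <= inner x x.
Proof. apply inner_nonneg. Qed.
Lemma norm_nn x : 0 <= norm x.
Proof. apply sqrt_pos. Qed.
Lemma norm_sq x : norm x * norm x = inner x x.
Proof. apply sqrt_sqrt, inn_nn. Qed.

Lemma norm_le_sq x y : inner x x <= inner y y -> norm x <= norm y.
Proof. apply sqrt_le_1_alt. Qed.
Lemma sq_le_norm x y : norm x <= norm y -> inner x x <= inner y y.
Proof. intro H. rewrite <- !norm_sq. pose proof (norm_nn x). nra. Qed.

Lemma CS x y : inner x y <= norm x * norm y.
Proof.
  destruct (Req_dec (inner y y) 0) as [H0|H0].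
  - apply inner_def in H0. subst y. rewrite izero_r.
    pose proof (norm_nn x); pose proof (norm_nn hzero); nra.
  - assert (Hy : 0 < inner y y) by (pose proof (inn_nn y); lra).
    assert (Hq : inner x y * inner x y <= inner x x * inner y y).
    { pose proof (inn_nn (hsub x (hscal (inner x y / inner y y) y))) as P.
      assert (E : inner (hsub x (hscal (inner x y / inner y y) y))
                        (hsub x (hscal (inner x y / inner y y) y))
        = inner x x - inner x y * inner x y / inner y y).
      { expand. symnorm. field. lra. }
      rewrite E in P.
      assert (0 <= (inner x x - inner x y * inner x y / inner y y) * inner y y) by nra.
      replace ((inner x x - inner x y * inner x y / inner y y) * inner y y) with
        (inner x x * inner y y - inner x y * inner x y) in H by (field; lra). lra. }
    pose proof (norm_sq x); pose proof (norm_sq y); pose proof (norm_nn x); pose proof (norm_nn y).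
    destruct (Rle_dec (inner x y) (norm x * norm y)) as [h|h]; auto.
    exfalso. apply Rnot_le_lt in h.
    assert (0 <= norm x * norm y) by nra.
    assert (norm x * norm y * (norm x * norm y) < inner x y * inner x y) by nra.
    nra.
Qed.

Lemma tri x y : norm (hadd x y) <= norm x + norm y.
Proof.
  pose proof (CS x y). pose proof (norm_sq x); pose proof (norm_sq y);
  pose proof (norm_nn x); pose proof (norm_nn y); pose proof (norm_nn (hadd x y)).
  pose proof (norm_sq (hadd x y)).
  assert (E : inner (hadd x y) (hadd x y) = inner x x + 2 * inner x y + inner y y) by rid.
  nra.
Qed.

Lemma norm_opp x : norm (hopp x) = norm x.
Proof. unfold norm. f_equal. rid. Qed.

Lemma norm_sub_sym a b : norm (hsub a b) = norm (hsub b a).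
Proof. unfold norm. f_equal. rid. Qed.

Lemma tri_sub a b c : norm (hsub a b) <= norm (hsub a c) + norm (hsub c b).
Proof.
  replace (hsub a b) with (hadd (hsub a c) (hsub c b)) by vec. apply tri.
Qed.

Lemma tri_minus a b : norm (hsub a b) <= norm a + norm b.
Proof. unfold hsub at 1. rewrite <- (norm_opp b). apply tri. Qed.

Lemma rev_tri a b : norm a <= norm b + norm (hsub a b).
Proof. replace a with (hadd b (hsub a b)) at 1 by vec. apply tri. Qed.

Lemma norm_scal l x : norm (hscal l x) = Rabs l * norm x.
Proof.
  unfold norm. rewrite iscal_l, iscal_r, <- Rmult_assoc, sqrt_mult.
  - f_equal. replace (l * l) with (Rsqr l) by (unfold Rsqr; ring). apply sqrt_Rsqr_abs.
  - nra.
  - apply inn_nn.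
Qed.

Lemma norm_self a : norm (hsub a a) = 0.
Proof. unfold norm. replace (inner (hsub a a) (hsub a a)) with 0 by rid. apply sqrt_0. Qed.

Lemma norm_zero_eq x : norm x = 0 -> x = hzero.
Proof. intro H. apply inner_def. rewrite <- norm_sq, H. ring. Qed.

End Norms.

Notation comb l a b := (hadd (hscal (1 - l) a) (hscal l b)).

Section Proj.
Context {X : HilbertSpace}.
Implicit Types x y z a b c : X.

Lemma inv_small e : 0 < e -> exists N : nat, forall n, (N <= n)%nat -> / (INR n + 1) < e.
Proof.
  intro He. destruct (INR_unbounded (/ e)) as [N HN]. exists N. intros n Hn.
  apply le_INR in Hn. pose proof (pos_INR N).
  assert (0 < / e) by (apply Rinv_0_lt_compat; lra).
  rewrite <- (Rinv_inv e). apply Rinv_lt_contravar; nra.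
Qed.

Lemma in_closure (C : @hset X) a : C a -> closure C a.
Proof. intros H e He. exists a. split; auto. rewrite norm_self. auto. Qed.

Lemma EX (C : @hset X) x : (exists c, C c) ->
  (forall a b l, C a -> C b -> C (comb l a b)) ->
  exists p, closure C p /\ forall c, closure C c -> norm (hsub x p) <= norm (hsub x c).
Proof.
  intros [c0 Hc0] Hconv.
  set (S := fun r => exists c, C c /\ r = - norm (hsub x c)).
  destruct (completeness S) as [m [Hub Hlub]].
  { exists 0. intros r [c [_ ->]]. pose proof (norm_nn (hsub x c)); lra. }
  { exists (- norm (hsub x c0)). exists c0; auto. }
  set (dn := - m).
  assert (Hm0 : m <= 0). { apply Hlub. intros r [c [_ ->]]. pose proof (norm_nn (hsub x c)); lra. }
  assert (D1 : forall c, C c -> dn <= norm (hsub x c)).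
  { intros c Hc. assert (- norm (hsub x c) <= m) by (apply Hub; exists c; auto). unfold dn; lra. }
  assert (D2 : forall e, 0 < e -> exists c, C c /\ norm (hsub x c) < dn + e).
  { intros e He. apply NNPP. intro Hn.
    assert (m <= m - e). { apply Hlub. intros r [c [Hc ->]].
      destruct (Rle_dec (- norm (hsub x c)) (m - e)) as [h|h]; auto.
      exfalso. apply Hn. exists c. split; auto. unfold dn; lra. }
    lra. }
  assert (Hu : forall n : nat, exists c, C c /\ norm (hsub x c) < dn + / (INR n + 1)).
  { intro n. apply D2. apply Rinv_0_lt_compat. pose proof (pos_INR n); lra. }
  destruct (choice _ Hu) as [u Hu'].
  assert (Hdn : 0 <= dn) by (unfold dn; lra).
  assert (Hen : forall n, 0 < / (INR n + 1) <= 1).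
  { intro n. pose proof (pos_INR n). split. apply Rinv_0_lt_compat; lra.
    rewrite <- Rinv_1. apply Rinv_le_contravar; lra. }
  assert (Hpar : forall n k, inner (hsub (u n) (u k)) (hsub (u n) (u k)) <=
              (4 * dn + 2) * (/ (INR n + 1) + / (INR k + 1))).
  { intros n k. destruct (Hu' n) as [Cn Nn]. destruct (Hu' k) as [Ck Nk].
    set (mid := comb (/2) (u n) (u k)).
    assert (Hmid : dn <= norm (hsub x mid)) by (apply D1, Hconv; auto).
    assert (E : inner (hsub (u n) (u k)) (hsub (u n) (u k)) =
      2 * inner (hsub x (u n)) (hsub x (u n)) + 2 * inner (hsub x (u k)) (hsub x (u k))
      - 4 * inner (hsub x mid) (hsub x mid)).
    { unfold mid. expand. symnorm. field. }
    rewrite E, <- !norm_sq.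
    pose proof (Hen n); pose proof (Hen k).
    pose proof (norm_nn (hsub x (u n))); pose proof (norm_nn (hsub x (u k))).
    set (a := norm (hsub x (u n))) in *. set (b := norm (hsub x (u k))) in *.
    set (g := norm (hsub x mid)) in *.
    set (en := / (INR n + 1)) in *. set (ek := / (INR k + 1)) in *.
    assert (a * a <= (dn + en) * (dn + en)) by nra.
    assert (b * b <= (dn + ek) * (dn + ek)) by nra.
    assert (dn * dn <= g * g) by nra.
    nra. }
  destruct (hcomplete X u) as [l Hl].
  { intros e He.
    destruct (inv_small (e * e / (2 * (4 * dn + 2)))) as [N HN].
    { apply Rdiv_lt_0_compat; nra. }
    exists N. intros n k Hn Hk.
    pose proof (Hpar n k). pose proof (HN n Hn). pose proof (HN k Hk).
    assert (inner (hsub (u n) (u k)) (hsub (u n) (u k)) < e * e).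
    { assert ((4 * dn + 2) * (/ (INR n + 1) + / (INR k + 1)) <
              (4 * dn + 2) * (2 * (e * e / (2 * (4 * dn + 2))))) by nra.
      replace ((4 * dn + 2) * (2 * (e * e / (2 * (4 * dn + 2))))) with (e * e) in H2
        by (field; lra). lra. }
    change (norm (hsub (u n) (u k)) < e).
    pose proof (norm_sq (hsub (u n) (u k))). pose proof (norm_nn (hsub (u n) (u k))).
    nra. }
  assert (Hl' : forall e, 0 < e -> exists N, forall n, (N <= n)%nat -> norm (hsub (u n) l) < e)
    by exact Hl.
  assert (Hcl : closure C l).
  { intros e He. destruct (Hl' e He) as [N HN]. exists (u N). split.
    - apply (Hu' N).
    - rewrite norm_sub_sym. apply HN. lia. }
  exists l. split; auto.
  assert (A1 : norm (hsub x l) <= dn).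
  { apply Rnot_lt_le. intro h.
    set (e := (norm (hsub x l) - dn) / 2).
    assert (He : 0 < e) by (unfold e; lra).
    destruct (Hl' e He) as [N1 HN1]. destruct (inv_small e He) as [N2 HN2].
    pose proof (HN1 (max N1 N2) ltac:(lia)). pose proof (HN2 (max N1 N2) ltac:(lia)).
    destruct (Hu' (max N1 N2)) as [_ Hn].
    pose proof (tri_sub x l (u (max N1 N2))).
    unfold e in *. lra. }
  intros c Hc. apply Rle_trans with dn; auto.
  apply Rnot_lt_le. intro h.
  destruct (Hc (dn - norm (hsub x c)) ltac:(lra)) as [s [Hs Hcs]].
  pose proof (D1 s Hs). pose proof (tri_sub x s c). lra.
Qed.

End Proj.

Section Proj2.
Context {X : HilbertSpace}.
Implicit Types x y z a b c : X.

Lemma VIL (C : @hset X) x p c : is_proj C x p -> C c ->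
  (forall t, 0 < t <= 1 -> C (comb t p c)) -> inner (hsub x p) (hsub c p) <= 0.
Proof.
  intros [Hp Hmin] Hc Hseg.
  set (A := inner (hsub x p) (hsub c p)). set (B := inner (hsub c p) (hsub c p)).
  assert (HB : 0 <= B) by apply inn_nn.
  assert (K : forall t, 0 < t <= 1 -> 2 * t * A <= t * t * B).
  { intros t Ht. pose proof (sq_le_norm _ _ (Hmin _ (Hseg t Ht))) as H.
    assert (E : inner (hsub x (comb t p c)) (hsub x (comb t p c)) =
       inner (hsub x p) (hsub x p) - 2 * t * A + t * t * B) by (unfold A, B; rid).
    lra. }
  apply Rnot_lt_le. intro hA.
  set (t := Rmin 1 (A / (B + 1))).
  assert (Ht : 0 < t <= 1).
  { unfold t. split. apply Rmin_glb_lt; [lra| apply Rdiv_lt_0_compat; lra]. apply Rmin_l. }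
  pose proof (K t Ht).
  assert (t * (B + 1) <= A).
  { unfold t. pose proof (Rmin_r 1 (A / (B + 1))).
    replace A with (A / (B + 1) * (B + 1)) at 2 by (field; lra). nra. }
  nra.
Qed.

Lemma VIU (C : @hset X) x p q :
  (forall c, C c -> inner (hsub x p) (hsub c p) <= 0) ->
  (forall c, C c -> inner (hsub x q) (hsub c q) <= 0) -> C p -> C q -> p = q.
Proof.
  intros H1 H2 Hp Hq. pose proof (H1 q Hq). pose proof (H2 p Hp).
  apply veq. apply Rle_antisym; [|apply inn_nn].
  assert (E : inner (hsub p q) (hsub p q) = inner (hsub x p) (hsub q p) + inner (hsub x q) (hsub p q)) by rid.
  lra.
Qed.

Lemma proj_is (C : @hset X) x : is_closed_affine C -> is_proj C x (proj C x).
Proof.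
  intros [[Hne Haff] Hcl]. unfold proj. apply epsilon_spec.
  destruct (EX C x Hne (fun a b l => Haff a b l)) as [p [Hp Hmin]].
  exists p. split; auto. intros c Hc. apply Hmin. apply in_closure; auto.
Qed.

Lemma proj_in (C : @hset X) x : is_closed_affine C -> C (proj C x).
Proof. intro H. apply (proj_is C x H). Qed.

Lemma proj_VI (C : @hset X) x c : is_closed_affine C -> C c ->
  inner (hsub x (proj C x)) (hsub c (proj C x)) = 0.
Proof.
  intros HC Hc. pose proof (proj_is C x HC) as Hp. pose proof HC as [[_ Haff] _].
  assert (Hseg : forall c, C c -> forall t, 0 < t <= 1 -> C (comb t (proj C x) c)).
  { intros; apply Haff; auto. apply Hp. }
  pose proof (VIL C x _ c Hp Hc (Hseg c Hc)).
  set (p := proj C x) in *.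
  assert (Hc' : C (comb (-1) p c)) by (apply Haff; auto; apply Hp).
  pose proof (VIL C x _ _ Hp Hc' (Hseg _ Hc')).
  assert (E : inner (hsub x p) (hsub (comb (-1) p c) p) = - inner (hsub x p) (hsub c p)) by rid.
  lra.
Qed.

Lemma proj_VIle (C : @hset X) x c : is_closed_affine C -> C c ->
  inner (hsub x (proj C x)) (hsub c (proj C x)) <= 0.
Proof. intros; rewrite proj_VI; auto; lra. Qed.

Lemma proj_uniq (C : @hset X) x p : is_closed_affine C -> C p ->
  (forall c, C c -> inner (hsub x p) (hsub c p) <= 0) -> p = proj C x.
Proof.
  intros HC Hp H. apply (VIU C x); auto.
  - intros; apply proj_VIle; auto.
  - apply proj_in; auto.
Qed.

Lemma proj_aff (C : @hset X) l x y : is_closed_affine C ->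
  proj C (comb l x y) = comb l (proj C x) (proj C y).
Proof.
  intro HC. symmetry. apply proj_uniq; auto.
  - pose proof HC as [[_ Haff] _]. apply Haff; apply proj_in; exact HC.
  - intros c Hc. set (p := proj C x). set (q := proj C y).
    assert (E : inner (hsub (comb l x y) (comb l p q)) (hsub c (comb l p q)) =
      (1 - l) * (inner (hsub x p) (hsub c p) - l * inner (hsub x p) (hsub q p)) +
      l * (inner (hsub y q) (hsub c q) - (1 - l) * inner (hsub y q) (hsub p q))) by rid.
    rewrite E. unfold p, q. rewrite !proj_VI; auto; try apply proj_in; auto. lra.
Qed.

End Proj2.

Section Main.
Context {X : HilbertSpace}.
Implicit Types x y z a b c w : X.

Lemma JA (U : @hset X) x a : is_closed_affine U ->
  resolvent (op_inv (normal_cone U)) x a <-> a = hsub x (proj U x).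
Proof.
  intro HU. unfold resolvent, op_inv, normal_cone. split.
  - intros [Hp H]. set (p := hsub x a) in *.
    assert (Ea : a = hsub x p) by (unfold p; vec).
    assert (Hpp : p = proj U x).
    { apply proj_uniq; auto. intros c Hc. rewrite <- Ea. auto. }
    rewrite <- Hpp. exact Ea.
  - intros ->. assert (E : hsub x (hsub x (proj U x)) = proj U x) by vec.
    rewrite E. split. apply proj_in; auto. intros c Hc. apply proj_VIle; auto.
Qed.

Lemma JB (V : @hset X) w b : is_closed_affine V ->
  resolvent (op_inv_vee (normal_cone V)) w b <-> b = hadd w (proj V (hopp w)).
Proof.
  intro HV. unfold resolvent, op_inv_vee, op_vee, op_inv, normal_cone. split.
  - intros [Hq H]. set (q := hopp (hsub w b)) in *.
    assert (Eb : hopp b = hsub (hopp w) q) by (unfold q; vec).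
    assert (Hqq : q = proj V (hopp w)).
    { apply proj_uniq; auto. intros c Hc. rewrite <- Eb. auto. }
    rewrite <- Hqq. unfold q. vec.
  - intros ->. assert (E : hopp (hsub w (hadd w (proj V (hopp w)))) = proj V (hopp w)) by vec.
    rewrite E. split. apply proj_in; auto. intros c Hc.
    assert (E2 : hopp (hadd w (proj V (hopp w))) = hsub (hopp w) (proj V (hopp w))) by vec.
    rewrite E2. apply proj_VIle; auto.
Qed.

Lemma T_aff (U V : @hset X) l x y : is_closed_affine U -> is_closed_affine V ->
  T_UV U V (comb l x y) = comb l (T_UV U V x) (T_UV U V y).
Proof.
  intros HU HV. unfold T_UV. rewrite proj_aff; auto.
  set (p := proj U x). set (q := proj U y).
  assert (E : hsub (hscal 2 (comb l p q)) (comb l x y) =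
     comb l (hsub (hscal 2 p) x) (hsub (hscal 2 q) y)) by vec.
  rewrite E, proj_aff; auto. vec.
Qed.

Lemma T_ne (U V : @hset X) x y : is_closed_affine U -> is_closed_affine V ->
  norm (hsub (T_UV U V x) (T_UV U V y)) <= norm (hsub x y).
Proof.
  intros HU HV. unfold T_UV. apply norm_le_sq.
  pose proof (proj_VI U x (proj U y) HU (proj_in U y HU)) as h1.
  pose proof (proj_VI U y (proj U x) HU (proj_in U x HU)) as h2.
  set (p := proj U x) in *. set (p' := proj U y) in *.
  pose proof (proj_VI V (hsub (hscal 2 p) x) (proj V (hsub (hscal 2 p') y)) HV (proj_in _ _ HV)) as h3.
  pose proof (proj_VI V (hsub (hscal 2 p') y) (proj V (hsub (hscal 2 p) x)) HV (proj_in _ _ HV)) as h4.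
  set (q := proj V (hsub (hscal 2 p) x)) in *. set (q' := proj V (hsub (hscal 2 p') y)) in *.
  pose proof (inn_nn (hsub (hsub p p') (hsub q q'))) as h5.
  assert (E : inner (hsub (hadd (hsub x p) q) (hadd (hsub y p') q'))
                    (hsub (hadd (hsub x p) q) (hadd (hsub y p') q')) =
     inner (hsub x y) (hsub x y) - inner (hsub (hsub p p') (hsub q q')) (hsub (hsub p p') (hsub q q'))
     + 2 * (inner (hsub x p) (hsub p' p) + inner (hsub y p') (hsub p p') +
            inner (hsub (hsub (hscal 2 p) x) q) (hsub q' q) +
            inner (hsub (hsub (hscal 2 p') y) q') (hsub q q'))) by rid.
  rewrite E, h1, h2, h3, h4. lra.
Qed.

Lemma Q_ne (U : @hset X) x y : is_closed_affine U ->
  norm (hsub (hsub x (proj U x)) (hsub y (proj U y))) <= norm (hsub x y).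
Proof.
  intros HU. apply norm_le_sq.
  pose proof (proj_VI U x (proj U y) HU (proj_in U y HU)) as h1.
  pose proof (proj_VI U y (proj U x) HU (proj_in U x HU)) as h2.
  set (p := proj U x) in *. set (p' := proj U y) in *.
  pose proof (inn_nn (hsub p p')) as h5.
  assert (E : inner (hsub (hsub x p) (hsub y p')) (hsub (hsub x p) (hsub y p')) =
     inner (hsub x y) (hsub x y) - inner (hsub p p') (hsub p p')
     + 2 * (inner (hsub x p) (hsub p' p) + inner (hsub y p') (hsub p p'))) by rid.
  rewrite E, h1, h2. lra.
Qed.

Lemma r_eq_v (r v : X) : inner r r <= inner v v -> inner (hsub hzero v) (hsub r v) <= 0 -> r = v.
Proof.
  intros H1 H2. apply veq. apply Rle_antisym; [|apply inn_nn].
  assert (E : inner (hsub r v) (hsub r v) = inner r r - inner v v + 2 * inner (hsub hzero v) (hsub r v)) by rid.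
  lra.
Qed.

End Main.

Theorem mainTheorem13 (X : HilbertSpace) (U V : @hset X) :
  is_closed_affine U -> is_closed_affine V ->
  (forall x, ~ (U x /\ V x)) ->
  ran_Id_minus (T_UV U V) (proj (closure (ran_Id_minus (T_UV U V))) hzero) ->
  (forall x z, DR_op (op_inv (normal_cone U)) (op_inv_vee (normal_cone V)) x z
               <-> z = T_UV U V x) /\
  (forall (x : X) (n : nat),
     forall y, resolvent (op_inv (normal_cone U)) (Nat.iter n (T_UV U V) x) y
       <-> y = hsub (Nat.iter n (T_UV U V) x) (proj U (Nat.iter n (T_UV U V) x))) /\
  (forall x : X, forall M : R, exists N : nat, forall n : nat, (N <= n)%nat ->
     forall y, resolvent (op_inv (normal_cone U)) (Nat.iter n (T_UV U V) x) y ->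
       M < norm y).
Proof.
  intros HU HV Hdisj Hran.
  split; [|split].
  - intros x z. split.
    + intros [a [b [Ha [Hb ->]]]]. apply JA in Ha; auto. apply JB in Hb; auto.
      subst a. rewrite Hb. unfold T_UV.
      assert (E : hopp (hsub (hscal 2 (hsub x (proj U x))) x) = hsub (hscal 2 (proj U x)) x) by vec.
      rewrite E. vec.
    + intros ->. exists (hsub x (proj U x)).
      exists (hadd (hsub (hscal 2 (hsub x (proj U x))) x)
                   (proj V (hopp (hsub (hscal 2 (hsub x (proj U x))) x)))).
      split; [apply JA; auto|split; [apply JB; auto|]].
      unfold T_UV.
      assert (E : hopp (hsub (hscal 2 (hsub x (proj U x))) x) = hsub (hscal 2 (proj U x)) x) by vec.
      rewrite E. vec.
  - intros x n y. apply JA; auto.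
  - set (T := T_UV U V) in *.
    set (R := ran_Id_minus T) in *.
    set (v := proj (closure R) hzero) in *.
    destruct Hran as [z Hz].
    assert (Rconv : forall a b l, R a -> R b -> R (comb l a b)).
    { intros a b l [wa ->] [wb ->]. exists (comb l wa wb). unfold T. rewrite T_aff; auto. vec. }
    assert (Hproj : is_proj (closure R) hzero v).
    { unfold v, proj. apply epsilon_spec.
      destruct (EX R hzero (ex_intro _ (hsub hzero (T hzero)) (ex_intro _ hzero eq_refl)) Rconv)
        as [p [Hp Hmin]].
      exists p; split; auto. }
    set (r := hsub (T z) (T (T z))).
    assert (HRr : R r) by (exists (T z); reflexivity).
    assert (HRv : R v) by (exists z; exact Hz).
    pose proof (VIL (closure R) hzero v r Hproj (in_closure R r HRr)
                (fun t _ => in_closure R _ (Rconv v r t HRv HRr))) as Hvi.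
    pose proof (T_ne U V z (T z) HU HV) as Hne. fold T in Hne. rewrite <- Hz in Hne.
    apply sq_le_norm in Hne.
    pose proof (r_eq_v r v Hne Hvi) as Hrv.
    assert (G : forall a b c : X, hsub a b = hsub c a -> b = hsub (hscal 2 a) c).
    { intros a b c H. replace b with (hsub a (hsub a b)) by vec. rewrite H. vec. }
    assert (HTT : T (T z) = hsub (hscal 2 (T z)) z).
    { apply G. unfold r in Hrv. rewrite Hrv, Hz. reflexivity. }
    assert (Hit : forall n, Nat.iter n T z = comb (INR n) z (T z)).
    { induction n.
      - simpl. change (INR 0) with 0. vec.
      - simpl Nat.iter. rewrite IHn. unfold T at 1. rewrite T_aff; auto. fold T.
        rewrite HTT, S_INR. vec. }
    assert (Hnei : forall x n, norm (hsub (Nat.iter n T x) (Nat.iter n T z)) <= norm (hsub x z)).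
    { intros x n. induction n. simpl. lra.
      simpl. eapply Rle_trans; [apply T_ne; auto| exact IHn]. }
    assert (Qaff : forall l a b, hsub (comb l a b) (proj U (comb l a b)) =
        comb l (hsub a (proj U a)) (hsub b (proj U b))).
    { intros. rewrite proj_aff; auto. vec. }
    set (w0 := hsub (hsub z (proj U z)) (hsub (T z) (proj U (T z)))).
    assert (Hw0 : 0 < norm w0).
    { destruct (Rle_lt_or_eq_dec 0 (norm w0) (norm_nn w0)) as [h|h]; auto.
      exfalso. symmetry in h. apply norm_zero_eq in h.
      assert (Eq : hsub z (proj U z) = hsub (T z) (proj U (T z))).
      { apply veq. fold w0. rewrite h. apply izero_l. }
      unfold T in Eq. unfold T_UV in Eq at 2.
      assert (G2 : forall a q P : X, a = hsub (hadd a q) P -> P = q).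
      { intros a q P H. replace P with (hsub (hadd a q) (hsub (hadd a q) P)) by vec.
        rewrite <- H. vec. }
      apply G2 in Eq.
      apply (Hdisj (proj V (hsub (hscal 2 (proj U z)) z))). split.
      - rewrite <- Eq. apply proj_in; auto.
      - apply proj_in; auto. }
    intros x M.
    set (K := norm (hsub z (proj U z)) + norm (hsub x z)).
    destruct (INR_unbounded ((M + K) / norm w0)) as [N HN].
    exists N. intros n Hn y Hy. apply JA in Hy; auto. subst y.
    set (xn := Nat.iter n T x) in *.
    pose proof (Hit n) as Ha. pose proof (Hnei x n) as Hxn. fold xn in Hxn.
    set (an := Nat.iter n T z) in *.
    assert (F1 : INR n * norm w0 <= norm (hsub z (proj U z)) + norm (hsub an (proj U an))).
    { rewrite Ha, Qaff.
      assert (E : hscal (INR n) w0 = hsub (hsub z (proj U z))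
            (comb (INR n) (hsub z (proj U z)) (hsub (T z) (proj U (T z))))) by (unfold w0; vec).
      replace (INR n * norm w0) with (norm (hscal (INR n) w0))
        by (rewrite norm_scal, Rabs_pos_eq; [reflexivity| apply pos_INR]).
      rewrite E. apply tri_minus. }
    assert (F2 : norm (hsub an (proj U an)) <= norm (hsub xn (proj U xn)) + norm (hsub x z)).
    { pose proof (rev_tri (hsub an (proj U an)) (hsub xn (proj U xn))).
      pose proof (Q_ne U an xn HU). rewrite norm_sub_sym in Hxn. lra. }
    apply le_INR in Hn.
    assert ((M + K) / norm w0 * norm w0 = M + K) by (field; lra).
    assert (M + K < INR n * norm w0) by nra.
    unfold K in *. lra.
Qed.
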